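(* For every $n\ge1$ and every essential lattice congruence $R\in\mathcal C_n^*$, the minimum degree of the quotient graph $Q_R$ is exactly $n-1$.
   Context: $S_n$ is the set of permutations of $[n]$ with the weak order (inclusion of inversion sets); a lattice congruence is an equivalence relation compatible with joins and meets. Lattice congruences $R$ correspond bijectively to downsets $F_R$ of the forcing order on fences, where a cover edge joins $R$-equivalent permutations iff it lies in a fence of $F_R$. Fences. For $1\le a<b\le n$ and $L\subseteq\{a+1,\dots,b-1\}$, the fence $f(a,b,L)$ is the set of cover edges that swap adjacent entries $a,b$, with the values of $L$ to the left of $a,b$ and the other values between $a$ and $b$ to the right. Forcing order: $f(a,b,L)\prec f(c,d,M)$ iff $a\le c<d\le b$, $(a,b)\ne(c,d)$, $M=L\cap\{c+1,\dots,d-1\}$. $R$ is essential if $F_R$ contains no $f(a,a+1,\emptyset)$. $Q_R$ is the undirected cover graph of the lattice quotient $S_n/R$. *)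

(* Defs.v *)
From mathcomp Require Import all_boot all_fingroup.
Set Implicit Arguments. Unset Strict Implicit. Unset Printing Implicit Defensive.

(* Conventions: values and positions are 0..n-1 (the paper uses 1..n).
   A permutation p : 'S_n is read as the word p 0, p 1, ..., p (n-1):
   position k carries value p k; the position of value c is (p^-1) c. *)

Section Weak.
Variable n : nat.
Implicit Types p q x y z w : 'S_n.

Definition inv_set p : {set 'I_n * 'I_n} :=
  [set ab : 'I_n * 'I_n | (ab.1 < ab.2) && ((p^-1)%g ab.2 < (p^-1)%g ab.1)].

Definition weak_le p q : bool := inv_set p \subset inv_set q.

Definition is_join x y z : bool :=
  [&& weak_le x z, weak_le y z &
      [forall w, (weak_le x w && weak_le y w) ==> weak_le z w]].
Definition is_meet x y z : bool :=
  [&& weak_le z x, weak_le z y &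
      [forall w, (weak_le w x && weak_le w y) ==> weak_le w z]].

Definition lattice_congruence (R : rel 'S_n) : Prop :=
  [/\ reflexive R, symmetric R, transitive R,
      (forall x x' y y' z z', R x x' -> R y y' ->
          is_join x y z -> is_join x' y' z' -> R z z') &
      (forall x x' y y' z z', R x x' -> R y y' ->
          is_meet x y z -> is_meet x' y' z' -> R z z')].

(* (p, q) is a cover edge of the weak order (p below q) swapping the adjacent
   entries p i < p j at positions i, j = i+1; it belongs to the fence
   f(a,b,L) iff p i = a, p j = b, and every value c with a<c<b is to the left
   of the pair iff c \in L. *)
Definition in_fence (a b : 'I_n) (L : {set 'I_n}) p q : Prop :=
  exists i j : 'I_n,
    [/\ val j = (val i).+1, p i = a, p j = b,
        (forall k, q k = p (tperm i j k)) &
        (forall c : 'I_n, a < c < b -> (c \in L) = ((p^-1)%g c < i))].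

(* f(a,b,L) belongs to F_R : its edges are R-contracted (by the
   correspondence, some edge of a fence is contracted iff all are). *)
Definition fence_in_FR (R : rel 'S_n) (a b : 'I_n) (L : {set 'I_n}) : Prop :=
  exists p q, in_fence a b L p q /\ R p q.

Definition essential (R : rel 'S_n) : Prop :=
  forall a b : 'I_n, val b = (val a).+1 -> ~ fence_in_FR R a b set0.

Definition cls (R : rel 'S_n) p : {set 'S_n} := [set q | R p q].
Definition is_class (R : rel 'S_n) (X : {set 'S_n}) : bool :=
  [exists p, X == cls R p].
Definition q_le (X Y : {set 'S_n}) : bool :=
  [exists x in X, exists y in Y, weak_le x y].
Definition q_lt (X Y : {set 'S_n}) : bool := (X != Y) && q_le X Y.
Definition q_cover (R : rel 'S_n) (X Y : {set 'S_n}) : bool :=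
  q_lt X Y && ~~ [exists Z, [&& is_class R Z, q_lt X Z & q_lt Z Y]].
Definition q_adj (R : rel 'S_n) (X Y : {set 'S_n}) : bool :=
  q_cover R X Y || q_cover R Y X.
Definition q_deg (R : rel 'S_n) (X : {set 'S_n}) : nat :=
  #|[set Y | is_class R Y && q_adj R X Y]|.

End Weak.

(* Main.v *)
Require Import Defs.
From mathcomp Require Import all_boot all_fingroup.
From mathcomp Require Import zify.
Set Implicit Arguments. Unset Strict Implicit. Unset Printing Implicit Defensive.

Section Main.
Variable n : nat.
Implicit Types x y z : 'S_n.

Definition pos x (v : 'I_n) : nat := (x^-1)%g v.
Definition bef x u v := pos x u < pos x v.
Definition ir x (a b : 'I_n) := (a < b) && bef x b a.

Lemma in_inv_set x a b : ((a,b) \in inv_set x) = ir x a b.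
Proof. by rewrite inE. Qed.

Lemma weak_leP x y : reflect (forall a b, ir x a b -> ir y a b) (weak_le x y).
Proof.
apply: (iffP subsetP) => H.
  by move=> a b; have := H (a,b); rewrite !in_inv_set; exact.
by move=> [a b]; rewrite !in_inv_set; exact: H.
Qed.

Lemma pos_inj x : injective (pos x).
Proof. move=> u v /val_inj; exact: perm_inj. Qed.

Lemma bef_irr x u : bef x u u = false.
Proof. by rewrite /bef ltnn. Qed.

Lemma bef_total x u v : u != v -> bef x u v || bef x v u.
Proof.
move=> Huv; rewrite /bef; case: (ltngtP (pos x u) (pos x v)) => // /pos_inj E.
by rewrite E eqxx in Huv.
Qed.

Lemma bef_asym x u v : bef x u v -> bef x v u = false.
Proof. rewrite /bef => H; apply/negbTE; rewrite -leqNgt; exact: ltnW. Qed.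

Lemma bef_trans x u v w : bef x u v -> bef x v w -> bef x u w.
Proof. rewrite /bef; exact: ltn_trans. Qed.

Lemma weak_le_refl x : weak_le x x.
Proof. exact: subxx. Qed.

Lemma weak_le_trans x y z : weak_le x y -> weak_le y z -> weak_le x z.
Proof. exact: subset_trans. Qed.

Lemma bef_ir x u v : u != v ->
  bef x u v = if u < v then ~~ ir x u v else ir x v u.
Proof.
move=> Huv; rewrite /ir; case: ltngtP => [lt|gt|E]; rewrite /=.
- case E1: (bef x u v) => /=; first by rewrite bef_asym.
  by have := bef_total x Huv; rewrite E1 /= => ->.
- by [].
- by move/val_inj: E Huv => ->; rewrite eqxx.
Qed.

Lemma card_lt_ord (m : nat) : m <= n -> #|[set k : 'I_n | k < m]| = m.
Proof.
move=> Hm.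
have -> : [set k : 'I_n | k < m] = [set widen_ord Hm k | k in 'I_m].
  apply/setP => k; rewrite inE; apply/idP/imsetP => [Hk|[j _ ->]] //=.
  by exists (Ordinal Hk) => //; apply: val_inj.
rewrite card_imset ?card_ord //.
by move=> i j /(congr1 val) /= /val_inj.
Qed.

Lemma card_bef x v : #|[set u | bef x u v]| = pos x v.
Proof.
have -> : [set u | bef x u v] = [set x k | k in [set k : 'I_n | k < pos x v]].
  apply/setP => u; rewrite inE /bef; apply/idP/imsetP.
    move=> H; exists ((x^-1)%g u); first by rewrite inE.
    by rewrite permKV.
  by case=> k; rewrite inE => Hk ->; rewrite /pos permK.
rewrite (card_imset _ (@perm_inj _ x)).
by rewrite card_lt_ord //; apply: ltnW; exact: ltn_ord.
Qed.

Lemma ir_ext x y : (forall a b, ir x a b = ir y a b) -> x = y.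
Proof.
move=> H.
have Hb : forall u v, bef x u v = bef y u v.
  move=> u v; case: (eqVneq u v) => [->|Huv]; first by rewrite !bef_irr.
  by rewrite !bef_ir // !H.
have Hp : forall v, pos x v = pos y v.
  by move=> v; rewrite -!card_bef; apply: eq_card => u; rewrite !inE Hb.
apply: (@invg_inj _ x y); apply/permP => v; apply: val_inj; exact: Hp.
Qed.

Lemma weak_le_anti x y : weak_le x y -> weak_le y x -> x = y.
Proof.
move=> /weak_leP H1 /weak_leP H2; apply: ir_ext => a b.
by apply/idP/idP; [apply: H1|apply: H2].
Qed.

Definition biclosed (A : rel 'I_n) :=
 [/\ forall a b : 'I_n, A a b -> a < b,
     forall a b c : 'I_n, A a b -> A b c -> A a c &
     forall a b c : 'I_n, a < b -> b < c -> A a c -> A a b || A b c].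

Lemma ir_biclosed x : biclosed (ir x).
Proof.
split.
- by move=> a b /andP[].
- move=> a b c /andP[ab ba] /andP[bc cb]; rewrite /ir (ltn_trans ab bc) /=.
  exact: bef_trans cb ba.
- move=> a b c ab bc /andP[ac ca]; rewrite /ir ab bc /=.
  have : b != a by rewrite neq_ltn ab orbT.
  move/(bef_total x); case/orP=> [ba|ab'].
    by rewrite ba.
  by rewrite (bef_trans ca ab') orbT.
Qed.

Definition cpl (A : rel 'I_n) : rel 'I_n := fun a b => (a < b) && ~~ A a b.

Lemma cpl_biclosed A : biclosed A -> biclosed (cpl A).
Proof.
move=> [H1 H2 H3]; split.
- by move=> a b /andP[].
- move=> a b c /andP[ab nab] /andP[bc nbc]; rewrite /cpl (ltn_trans ab bc) /=.
  apply/negP => Hac; have := H3 _ _ _ ab bc Hac.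
  by rewrite (negbTE nab) (negbTE nbc).
- move=> a b c ab bc /andP[ac nac]; rewrite /cpl ab bc /=.
  rewrite -negb_and; apply/negP => /andP[Hab Hbc]; by rewrite (H2 _ _ _ Hab Hbc) in nac.
Qed.

Lemma cpl_ir x a b : cpl (ir x) a b = (a < b) && bef x a b.
Proof.
rewrite /cpl /ir; case ab: (a < b) => //=.
have nab : a != b by rewrite neq_ltn ab.
have := bef_total x nab.
case E: (bef x a b); first by rewrite bef_asym.
by case: (bef x b a).
Qed.

End Main.

Section Main.
Variable n : nat.
Implicit Types x y z : 'S_n.

Definition befA (A : rel 'I_n) (u v : 'I_n) : bool :=
  if u < v then ~~ A u v else if v < u then A v u else false.

Lemma befA_irr A u : befA A u u = false.
Proof. by rewrite /befA ltnn. Qed.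

Lemma befA_total A u v : u != v -> befA A u v || befA A v u.
Proof.
rewrite /befA neq_ltn; case: ltngtP => //= [uv|vu] _.
  by case: (A u v).
by case: (A v u).
Qed.

Lemma befA_asym A u v : befA A u v -> befA A v u = false.
Proof.
rewrite /befA; case: ltngtP => //= [uv|vu].
  by move=> /negbTE.
by move=> ->.
Qed.

Lemma befA_trans A u v w : biclosed A -> befA A u v -> befA A v w -> befA A u w.
Proof.
move=> [H1 H2 H3].
case: (eqVneq u w) => [->|uw]; first by move=> h1 h2; rewrite (befA_asym h1) in h2.
rewrite /befA.
case: (ltngtP u v) => [uv|vu|E] huv; last by [].
- case: (ltngtP v w) => [vw|wv|E] hvw; last by [].
  + rewrite (ltn_trans uv vw); apply/negP => Huw.
    by have := H3 _ _ _ uv vw Huw; rewrite (negbTE huv) (negbTE hvw).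
  + case: (ltngtP u w) => [uw'|wu|E]; last by move/val_inj: E uw => ->; rewrite eqxx.
    * apply/negP => Huw; by rewrite (H2 _ _ _ Huw hvw) in huv.
    * by have := H3 _ _ _ wu uv hvw; rewrite (negbTE huv) orbF.
- case: (ltngtP v w) => [vw|wv|E] hvw; last by [].
  + case: (ltngtP u w) => [uw'|wu|E]; last by move/val_inj: E uw => ->; rewrite eqxx.
    * apply/negP => Huw; by rewrite (H2 _ _ _ huv Huw) in hvw.
    * by have := H3 _ _ _ vw wu huv; rewrite (negbTE hvw).
  + have wu := ltn_trans wv vu.
    by rewrite ltnNge (ltnW wu) /= wu; exact: H2 _ _ _ hvw huv.
Qed.

Definition fA A (v : 'I_n) : nat := #|[set u | befA A u v]|.

Lemma fA_lt A v : fA A v < n.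
Proof.
rewrite /fA -[X in _ < X](card_ord n) -cardsT; apply: proper_card.
rewrite properT; apply/eqP => E.
have : v \in [set u | befA A u v] by rewrite E inE.
by rewrite inE befA_irr.
Qed.

Lemma fA_mono A u v : biclosed A -> befA A u v -> fA A u < fA A v.
Proof.
move=> bA huv; apply: proper_card; apply/properP; split.
  by apply/subsetP => w; rewrite !inE => hw; exact: befA_trans hw huv.
by exists u; rewrite !inE // befA_irr.
Qed.

Lemma fA_inj A : biclosed A -> injective (fun v => Ordinal (fA_lt A v)).
Proof.
move=> bA u v /(congr1 val) /= E; apply/eqP; apply/negPn/negP => uv.
by case/orP: (befA_total A uv) => /(fA_mono bA); rewrite E ltnn.
Qed.

Lemma realize A : biclosed A -> {x : 'S_n | forall a b, ir x a b = A a b}.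
Proof.
move=> bA; exists ((perm (fA_inj bA))^-1)%g => a b.
have Hp : forall v, pos ((perm (fA_inj bA))^-1)%g v = fA A v.
  by move=> v; rewrite /pos invgK permE.
have [H1 _ _] := bA.
rewrite /ir /bef !Hp.
case ab: (a < b); last by apply/esym/negP => /H1; rewrite ab.
have nab : a != b by rewrite neq_ltn ab.
case: (boolP (befA A b a)) => hba.
  rewrite /= (fA_mono bA hba); move: hba; rewrite /befA ltnNge (ltnW ab) /= ab //.
have hab : befA A a b by move: (befA_total A nab); rewrite (negbTE hba) orbF.
rewrite /= ltnNge (ltnW (fA_mono bA hab)) /=.
by move: hab; rewrite /befA ab => /negbTE.
Qed.

End Main.

Section Main.
Variable n : nat.
Implicit Types x y z : 'S_n.

Definition urel (A B : rel 'I_n) : rel 'I_n := fun u v => A u v || B u v.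
Definition tcr (A B : rel 'I_n) : rel 'I_n :=
  fun a b => (a < b) && connect (urel A B) a b.

Lemma trans_path (C : rel 'I_n) :
  (forall a b c, C a b -> C b c -> C a c) ->
  forall s a, path C a s -> a = last a s \/ C a (last a s).
Proof.
move=> Ht; elim=> [|y s IH] a /=; first by left.
case/andP=> Cay Hp; right; case: (IH y Hp) => [<-|Hy] //.
exact: Ht Cay Hy.
Qed.

Lemma trans_connect (C : rel 'I_n) a b :
  (forall a b c, C a b -> C b c -> C a c) -> connect C a b -> a = b \/ C a b.
Proof. by move=> Ht /connectP[s Hp ->]; exact: trans_path. Qed.

Lemma tcr_least (A B C : rel 'I_n) :
  (forall a b c, C a b -> C b c -> C a c) ->
  (forall a b, A a b -> C a b) -> (forall a b, B a b -> C a b) ->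
  forall a b, tcr A B a b -> C a b.
Proof.
move=> Ht HA HB a b /andP[ab Hc].
have : connect C a b.
  apply: (connect_sub _ Hc) => u v /orP[/HA|/HB] H; exact: connect1.
case/(trans_connect Ht) => // E; by rewrite E ltnn in ab.
Qed.

Lemma tcr_path (A B : rel 'I_n) : biclosed A -> biclosed B ->
  forall s (a : 'I_n), path (urel A B) a s -> forall b : 'I_n, a < b -> b < last a s ->
  connect (urel A B) a b || connect (urel A B) b (last a s).
Proof.
move=> [A1 A2 A3] [B1 B2 B3]; elim=> [|y s IH] a /=.
  by move=> _ b ab_ bx; have := ltn_trans ab_ bx; rewrite ltnn.
case/andP=> Eay Hp b ab_ bl.
have Hly : connect (urel A B) y (last y s) by apply/connectP; exists s.
case: (ltngtP b y) => [by_|yb|E].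
- case/orP: Eay => [Aay|Bay].
  + case/orP: (A3 _ _ _ ab_ by_ Aay) => H.
      by rewrite connect1 // /urel H.
    by rewrite (connect_trans (connect1 (_ : urel A B b y)) Hly) ?orbT // /urel H.
  + case/orP: (B3 _ _ _ ab_ by_ Bay) => H.
      by rewrite connect1 // /urel H orbT.
    by rewrite (connect_trans (connect1 (_ : urel A B b y)) Hly) ?orbT // /urel H orbT.
- case/orP: (IH y Hp b yb bl) => H.
    by rewrite (connect_trans (connect1 Eay) H).
  by rewrite H orbT.
- by move/val_inj: E => ->; rewrite Hly orbT.
Qed.

Lemma tcr_biclosed A B : biclosed A -> biclosed B -> biclosed (tcr A B).
Proof.
move=> bA bB; split.
- by move=> a b /andP[].
- move=> a b c /andP[ab Hab] /andP[bc Hbc].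
  by rewrite /tcr (ltn_trans ab bc) (connect_trans Hab Hbc).
- move=> a b c ab bc /andP[ac /connectP[s Hp El]].
  have := tcr_path bA bB Hp ab; rewrite -El => /(_ bc).
  by rewrite /tcr ab bc.
Qed.

Definition joinp x y := sval (realize (tcr_biclosed (ir_biclosed x) (ir_biclosed y))).
Definition meetp x y := sval (realize (cpl_biclosed (tcr_biclosed
   (cpl_biclosed (ir_biclosed x)) (cpl_biclosed (ir_biclosed y))))).

Lemma ir_join x y a b : ir (joinp x y) a b = tcr (ir x) (ir y) a b.
Proof. by rewrite /joinp (svalP (realize _)). Qed.

Lemma ir_meet x y a b :
  ir (meetp x y) a b = cpl (tcr (cpl (ir x)) (cpl (ir y))) a b.
Proof. by rewrite /meetp (svalP (realize _)). Qed.

Lemma joinP x y : is_join x y (joinp x y).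
Proof.
apply/and3P; split.
- apply/weak_leP => a b H; rewrite ir_join /tcr.
  by have [H1 _ _] := ir_biclosed x; rewrite (H1 _ _ H) connect1 // /urel H.
- apply/weak_leP => a b H; rewrite ir_join /tcr.
  by have [H1 _ _] := ir_biclosed y; rewrite (H1 _ _ H) connect1 // /urel H orbT.
- apply/forallP => w; apply/implyP => /andP[/weak_leP Hx /weak_leP Hy].
  apply/weak_leP => a b; rewrite ir_join; apply: tcr_least => //.
  by have [_ H2 _] := ir_biclosed w.
Qed.

Lemma meetP x y : is_meet x y (meetp x y).
Proof.
apply/and3P; split.
- apply/weak_leP => a b; rewrite ir_meet => /andP[ab Hn].
  apply/negPn/negP => Hx; move: Hn; rewrite /tcr ab connect1 //.
  by rewrite /urel /cpl ab Hx.
- apply/weak_leP => a b; rewrite ir_meet => /andP[ab Hn].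
  apply/negPn/negP => Hx; move: Hn; rewrite /tcr ab connect1 //.
  by rewrite /urel /cpl ab Hx orbT.
- apply/forallP => w; apply/implyP => /andP[/weak_leP Hx /weak_leP Hy].
  apply/weak_leP => a b Hw; rewrite ir_meet /cpl.
  have [H1 _ _] := ir_biclosed w; rewrite (H1 _ _ Hw) /=.
  apply/negP => /(tcr_least _ _ _) H.
  have : cpl (ir w) a b.
    apply: H.
    - by have [_ H2 _] := cpl_biclosed (ir_biclosed w).
    - move=> u v /andP[uv nx]; rewrite /cpl uv /=; apply/negP => /Hx.
      by rewrite (negbTE nx).
    - move=> u v /andP[uv nx]; rewrite /cpl uv /=; apply/negP => /Hy.
      by rewrite (negbTE nx).
  by rewrite /cpl Hw andbF.
Qed.

End Main.

Section Main.
Variable n : nat.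
Implicit Types x y z : 'S_n.

Definition sw (i j : 'I_n) x : 'S_n := (tperm i j * x)%g.

Lemma sw_val (i j : 'I_n) x k : sw i j x k = x (tperm i j k).
Proof. by rewrite /sw permM. Qed.

Lemma pos_sw (i j : 'I_n) x v : pos (sw i j x) v = tperm i j ((x^-1)%g v).
Proof. by rewrite /pos /sw invMg tpermV permM. Qed.

Lemma neq_val (k i : 'I_n) : k <> i -> val k <> val i.
Proof. by move=> H /val_inj. Qed.

Lemma tperm_lt (i j k l : 'I_n) : val j = i.+1 ->
  ~ (k = i /\ l = j) -> ~ (k = j /\ l = i) ->
  (tperm i j k < tperm i j l) = (k < l).
Proof.
move=> ij H1 H2.
have {}ij : (j : nat) = i.+1 by [].
have neq_val : forall (k i : 'I_n), k <> i -> (k : nat) <> i by move=> ? ? H /val_inj.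
case: tpermP => [Ek|Ek|k1 k2]; case: tpermP => [El|El|l1 l2]; subst.
all: try (by exfalso; auto).
all: try (move: (neq_val _ _ k1) (neq_val _ _ k2) => {k1 k2} k1 k2).
all: try (move: (neq_val _ _ l1) (neq_val _ _ l2) => {l1 l2} l1 l2).
all: apply/idP/idP; lia.
Qed.

Lemma bef_sw_other (i j : 'I_n) x u v : val j = i.+1 ->
  ~ (u = x i /\ v = x j) -> ~ (u = x j /\ v = x i) ->
  bef (sw i j x) u v = bef x u v.
Proof.
move=> ij H1 H2; rewrite /bef !pos_sw /pos tperm_lt //.
- by case=> E1 E2; apply: H1; rewrite -E1 -E2 !permKV.
- by case=> E1 E2; apply: H2; rewrite -E1 -E2 !permKV.
Qed.

Lemma bef_sw_pair (i j : 'I_n) x : val j = i.+1 -> bef (sw i j x) (x j) (x i).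
Proof. by move=> ij; rewrite /bef !pos_sw /pos !permK tpermL tpermR ij. Qed.

Lemma ir_sw_other (i j : 'I_n) x a b : val j = i.+1 ->
  ~ (a = x i /\ b = x j) -> ~ (a = x j /\ b = x i) ->
  ir (sw i j x) a b = ir x a b.
Proof. by move=> ij H1 H2; rewrite /ir bef_sw_other //; intuition. Qed.

Lemma x_ij_neq (i j : 'I_n) x : val j = i.+1 -> x i != x j.
Proof.
move=> ij; apply/negP => /eqP /perm_inj E; rewrite E in ij; have h : (j : nat) = j.+1 := ij; lia.
Qed.

Lemma bef_x_ij (i j : 'I_n) x : val j = i.+1 -> bef x (x i) (x j).
Proof. by move=> ij; rewrite /bef /pos !permK ij. Qed.

Lemma ir_sw (i j : 'I_n) x a b : val j = i.+1 ->
  ir (sw i j x) a b =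
  if ((a == x i) && (b == x j)) || ((a == x j) && (b == x i))
  then (a < b) && ~~ ir x a b else ir x a b.
Proof.
move=> ij; case: ifP => H.
  case/orP: H => /andP[/eqP-> /eqP->]; rewrite /ir.
    by rewrite bef_sw_pair // (bef_asym (bef_x_ij x ij)) andbF andbT.
  by rewrite (bef_asym (bef_sw_pair x ij)) (bef_x_ij x ij) andbT andbN andbF.
by apply: ir_sw_other => // -[E1 E2]; move: H; rewrite E1 E2 !eqxx ?orbT.
Qed.

Lemma ir_sw_up (i j : 'I_n) x a b : val j = i.+1 -> x i < x j ->
  ir (sw i j x) a b = ir x a b || ((a == x i) && (b == x j)).
Proof.
move=> ij lt; rewrite ir_sw //; have nij := x_ij_neq x ij.
case: ifP => H.
  case/orP: H => /andP[/eqP-> /eqP->].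
    by rewrite !eqxx orbT lt /ir (bef_asym (bef_x_ij x ij)) andbF.
  by rewrite /ir ltnNge (ltnW lt) /= eq_sym (negbTE nij).
by move/negbT: H; rewrite negb_or => /andP[/negbTE -> _]; rewrite orbF.
Qed.

Lemma ir_sw_down (i j : 'I_n) x a b : val j = i.+1 -> x j < x i ->
  ir (sw i j x) a b = ir x a b && ~~ ((a == x j) && (b == x i)).
Proof.
move=> ij lt; rewrite ir_sw //; have nij := x_ij_neq x ij.
case: ifP => H.
  case/orP: H => /andP[/eqP-> /eqP->].
    by rewrite /ir ltnNge (ltnW lt) /= ?(negbTE nij).
  by rewrite !eqxx /ir lt (bef_x_ij x ij).
by move/negbT: H; rewrite negb_or => /andP[_ /negbTE ->]; rewrite andbT.
Qed.

Lemma adj_eq x y : (forall i j : 'I_n, val j = i.+1 -> bef y (x i) (x j)) -> x = y.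
Proof.
move=> H.
have Hge : forall m (k : 'I_n), val k = m -> m <= pos y (x k).
  elim=> [|m IH] k Hk //.
  have mn : m < n by rewrite -ltnS -Hk; exact: ltnW (ltn_ord k) .
  have := IH (Ordinal mn) erefl; have := H (Ordinal mn) k Hk; rewrite /bef; lia.
have Hle : forall m (k : 'I_n), val k + m = n.-1 -> pos y (x k) <= val k.
  elim=> [|m IH] k Hk.
    have := ltn_ord ((y^-1)%g (x k)); rewrite /pos; lia.
  have Hk' : (k:nat) + m.+1 = n.-1 := Hk.
  have kn : k.+1 < n by have := ltn_ord k; lia.
  have := IH (Ordinal kn) (etrans (addSnnS _ _) Hk).
  have := H k (Ordinal kn) erefl; rewrite /bef /=; lia.
apply/permP => k.
have E : pos y (x k) = val k.
  apply/eqP; rewrite eqn_leq Hge // andbT (Hle (n.-1 - val k)) //.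
  change (nat_of_ord k + (n.-1 - nat_of_ord k) = n.-1); have := ltn_ord k; lia.
have E' : (y^-1)%g (x k) = k by apply: val_inj.
by rewrite -{2}E' permKV.
Qed.

Lemma cover_up x y : weak_le x y -> x != y ->
  exists i j : 'I_n, [/\ val j = i.+1, x i < x j & ir y (x i) (x j)].
Proof.
move=> /weak_leP Hxy nxy.
case: (boolP [exists i, exists j, (val j == (val i).+1) && (x i < x j) && ir y (x i) (x j)]).
  by move/existsP => [i /existsP [j /andP[/andP[/eqP ij lt] H]]]; exists i, j.
move=> H; exfalso; move/eqP: nxy; apply; apply: adj_eq => i j ij.
have nij := x_ij_neq x ij.
case: (ltngtP (x i) (x j)) => [lt|gt|E].
- case/orP: (bef_total y nij) => // hb.
  case/negP: H; apply/existsP; exists i; apply/existsP; exists j.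
  by rewrite ij eqxx lt /ir lt hb.
- have : ir x (x j) (x i) by rewrite /ir gt bef_x_ij.
  by move/Hxy => /andP[].
- by move/val_inj: E nij => ->; rewrite eqxx.
Qed.

Lemma cover_down x y : weak_le x y -> x != y ->
  exists i j : 'I_n, [/\ val j = i.+1, y j < y i & ~~ ir x (y j) (y i)].
Proof.
move=> /weak_leP Hxy nxy.
case: (boolP [exists i, exists j, (val j == (val i).+1) && (y j < y i) && ~~ ir x (y j) (y i)]).
  by move/existsP => [i /existsP [j /andP[/andP[/eqP ij lt] H]]]; exists i, j.
move=> H; exfalso; move/eqP: nxy; apply; apply/esym; apply: adj_eq => i j ij.
have nij := x_ij_neq y ij.
case: (ltngtP (y i) (y j)) => [lt|gt|E].
- case/orP: (bef_total x nij) => // hb.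
  have : ir x (y i) (y j) by rewrite /ir lt hb.
  by move/Hxy; rewrite /ir lt (bef_asym (bef_x_ij y ij)).
- case: (boolP (ir x (y j) (y i))) => [/andP[] //|hn].
  case/negP: H; apply/existsP; exists i; apply/existsP; exists j.
  by rewrite ij eqxx gt hn.
- by move/val_inj: E nij => ->; rewrite eqxx.
Qed.

End Main.

Section Cong.
Variable n : nat.
Implicit Types x y z : 'S_n.

Definition wt x := #|inv_set x|.

Lemma wt_le x y : weak_le x y -> wt x <= wt y.
Proof. exact: subset_leq_card. Qed.

Lemma wt_eq x y : weak_le x y -> wt y <= wt x -> x = y.
Proof.
move=> Hxy Hw.
have E : inv_set x = inv_set y by apply/eqP; rewrite eqEcard; apply/andP; split.
by apply: ir_ext => a b; rewrite -!in_inv_set E.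
Qed.

Lemma wt_lt x y : weak_le x y -> x != y -> wt x < wt y.
Proof.
move=> Hxy nxy; rewrite ltnNge; apply/negP => H.
by rewrite (wt_eq Hxy H) eqxx in nxy.
Qed.

Lemma is_join_le x y : weak_le x y -> is_join x y y.
Proof.
move=> Hxy; apply/and3P; split => //; first exact: weak_le_refl.
by apply/forallP => w; apply/implyP => /andP[].
Qed.

Lemma is_join_le' x y : weak_le x y -> is_join y x y.
Proof.
move=> Hxy; apply/and3P; split => //; first exact: weak_le_refl.
by apply/forallP => w; apply/implyP => /andP[].
Qed.

Lemma is_meet_le x y : weak_le x y -> is_meet x y x.
Proof.
move=> Hxy; apply/and3P; split => //; first exact: weak_le_refl.
by apply/forallP => w; apply/implyP => /andP[].
Qed.

Lemma is_meet_le' x y : weak_le x y -> is_meet y x x.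
Proof.
move=> Hxy; apply/and3P; split => //; first exact: weak_le_refl.
by apply/forallP => w; apply/implyP => /andP[].
Qed.

Lemma join_uniq x y z : is_join x y z -> z = joinp x y.
Proof.
move=> /and3P[h1 h2 /forallP h3]; have /and3P[j1 j2 /forallP j3] := joinP x y.
apply: weak_le_anti.
  by have := h3 (joinp x y); rewrite j1 j2.
by have := j3 z; rewrite h1 h2.
Qed.

Lemma meet_uniq x y z : is_meet x y z -> z = meetp x y.
Proof.
move=> /and3P[h1 h2 /forallP h3]; have /and3P[j1 j2 /forallP j3] := meetP x y.
apply: weak_le_anti.
  by have := j3 z; rewrite h1 h2.
by have := h3 (meetp x y); rewrite j1 j2.
Qed.

Lemma join_le x y : weak_le x y -> joinp x y = y.
Proof. by move/is_join_le/join_uniq. Qed.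

Lemma meet_le x y : weak_le x y -> meetp x y = x.
Proof. by move/is_meet_le/meet_uniq. Qed.

Lemma join_le' x y : weak_le x y -> joinp y x = y.
Proof. by move/is_join_le'/join_uniq. Qed.

Lemma meet_le' x y : weak_le x y -> meetp y x = x.
Proof. by move/is_meet_le'/meet_uniq. Qed.

Lemma join_ub1 x y : weak_le x (joinp x y).
Proof. by have /and3P[] := joinP x y. Qed.
Lemma join_ub2 x y : weak_le y (joinp x y).
Proof. by have /and3P[] := joinP x y. Qed.
Lemma join_lub x y w : weak_le x w -> weak_le y w -> weak_le (joinp x y) w.
Proof.
move=> h1 h2; have /and3P[_ _ /forallP H] := joinP x y.
by have := H w; rewrite h1 h2.
Qed.
Lemma meet_lb1 x y : weak_le (meetp x y) x.
Proof. by have /and3P[] := meetP x y. Qed.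
Lemma meet_lb2 x y : weak_le (meetp x y) y.
Proof. by have /and3P[] := meetP x y. Qed.
Lemma meet_glb x y w : weak_le w x -> weak_le w y -> weak_le w (meetp x y).
Proof.
move=> h1 h2; have /and3P[_ _ /forallP H] := meetP x y.
by have := H w; rewrite h1 h2.
Qed.

Variable R : rel 'S_n.
Hypothesis HR : lattice_congruence R.

Lemma Rrefl x : R x x.
Proof. by case: HR. Qed.
Lemma Rsym x y : R x y -> R y x.
Proof. by case: HR => _ Hs _ _ _; rewrite Hs. Qed.
Lemma Rtrans x y z : R x y -> R y z -> R x z.
Proof. by case: HR => _ _ Ht _ _ h1 h2; exact: Ht h1 h2. Qed.

Lemma Rjoin x x' y y' z z' : R x x' -> R y y' -> is_join x y z -> is_join x' y' z' -> R z z'.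
Proof. by case: HR => _ _ _ Hj _; exact: Hj. Qed.
Lemma Rmeet x x' y y' z z' : R x x' -> R y y' -> is_meet x y z -> is_meet x' y' z' -> R z z'.
Proof. by case: HR => _ _ _ _ Hm; exact: Hm. Qed.

Lemma RjoinF x x' y y' : R x x' -> R y y' -> R (joinp x y) (joinp x' y').
Proof. move=> h1 h2; exact: Rjoin h1 h2 (joinP _ _) (joinP _ _). Qed.
Lemma RmeetF x x' y y' : R x x' -> R y y' -> R (meetp x y) (meetp x' y').
Proof. move=> h1 h2; exact: Rmeet h1 h2 (meetP _ _) (meetP _ _). Qed.

Lemma Rconvex x y z : weak_le x y -> weak_le y z -> R x z -> R x y.
Proof.
move=> hxy hyz hxz; apply: Rsym.
apply: (Rmeet (Rrefl y) (Rsym hxz) (is_meet_le hyz) (is_meet_le' hxy)).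
Qed.

Lemma cls_in p x : (x \in cls R p) = R p x.
Proof. by rewrite inE. Qed.

Lemma cls_eq p q : R p q -> cls R p = cls R q.
Proof.
move=> hpq; apply/setP => x; rewrite !cls_in; apply/idP/idP => h.
  exact: Rtrans (Rsym hpq) h.
exact: Rtrans hpq h.
Qed.

Lemma class_mem Z y : is_class R Z -> y \in Z -> Z = cls R y.
Proof.
by case/existsP => p /eqP -> ; rewrite cls_in => /cls_eq.
Qed.

Lemma class_eq Z Y y : is_class R Z -> is_class R Y -> y \in Z -> y \in Y -> Z = Y.
Proof. by move=> hZ hY h1 h2; rewrite (class_mem hZ h1) (class_mem hY h2). Qed.

Lemma cls_is_class p : is_class R (cls R p).
Proof. by apply/existsP; exists p. Qed.

Lemma cls_max p : exists M, R p M /\ forall x, R p x -> weak_le x M.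
Proof.
case: (@arg_maxnP _ p (fun x => R p x) wt (Rrefl p)) => M HM Hmax.
exists M; split => // x Hx.
have HJ : R p (joinp x M).
  apply: (Rtrans HM); rewrite -{1}(join_le (weak_le_refl M)).
  exact: RjoinF (Rtrans (Rsym HM) Hx) (Rrefl M).
have E := wt_eq (join_ub2 x M) (Hmax _ HJ).
by rewrite E join_ub1.
Qed.

Lemma cls_min p : exists m, R p m /\ forall x, R p x -> weak_le m x.
Proof.
case: (@arg_minnP _ p (fun x => R p x) wt (Rrefl p)) => m Hm Hmin.
exists m; split => // x Hx.
have HJ : R p (meetp x m).
  apply: (Rtrans Hm); rewrite -{1}(meet_le (weak_le_refl m)).
  exact: RmeetF (Rtrans (Rsym Hm) Hx) (Rrefl m).
have E := wt_eq (meet_lb2 x m) (Hmin _ HJ).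
by rewrite -E meet_lb1.
Qed.

End Cong.

Section Transfer.
Variable n : nat.
Implicit Types x y z : 'S_n.
Variable R : rel 'S_n.
Hypothesis HR : lattice_congruence R.

Lemma ir_pair_false x (k l : 'I_n) : val l = k.+1 -> ir x (x k) (x l) = false.
Proof.
move=> kl; rewrite /ir; apply/negbTE; rewrite negb_and; apply/orP; right.
by rewrite bef_asym // bef_x_ij.
Qed.

Lemma ir_pair_true x (k l : 'I_n) : val l = k.+1 -> x l < x k -> ir x (x l) (x k).
Proof. by move=> kl lt; rewrite /ir lt bef_x_ij. Qed.

Lemma transfer_up p M x (i j : 'I_n) :
  R p M -> (forall y, R p y -> weak_le y M) ->
  R p x -> val j = i.+1 -> x i < x j -> ~~ R p (sw i j x) ->
  exists k l : 'I_n, [/\ val l = k.+1, M k = x i & M l = x j].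
Proof.
move=> HM HMmax Hx ij lt Hx'.
set a := x i; set b := x j; set x' := sw i j x.
have Ix' : forall c d, ir x' c d = ir x c d || ((c == a) && (d == b)).
  by move=> c d; rewrite /x' ir_sw_up.
have hxM := HMmax _ Hx.
have Rxx' : weak_le x x' by apply/weak_leP => c d h; rewrite Ix' h.
have RxM : R x M := Rtrans HR (Rsym HR Hx) HM.
have nab : ~~ ir M a b.
  apply/negP => hab; case/negP: Hx'; apply: (Rtrans HR Hx).
  apply: (Rconvex HR Rxx') RxM; apply/weak_leP => c d; rewrite Ix'.
  case/orP => [/(weak_leP _ _ hxM) //|/andP[/eqP-> /eqP->]] //.
set top := joinp M x'.
have Rtop : R x' top.
  rewrite -{1}(join_le Rxx') /top; exact (RjoinF HR RxM (Rrefl HR x')).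
have Mtop : weak_le M top := join_ub1 M x'.
have x'top : weak_le x' top := join_ub2 M x'.
have itab : ir top a b by apply: (weak_leP _ _ x'top); rewrite Ix' !eqxx orbT.
have nMt : M != top by apply/eqP => E; rewrite E itab in nab.
case: (cover_up Mtop nMt) => k [l [kl ltM Htop]].
set y1 := sw k l M.
have Iy1 : forall c d, ir y1 c d = ir M c d || ((c == M k) && (d == M l)).
  by move=> c d; rewrite /y1 ir_sw_up.
case: (boolP ((a == M k) && (b == M l))) => [/andP[/eqP Ea /eqP Eb]|hne].
  by exists k, l.
exfalso.
have ny1 : ~~ ir y1 a b by rewrite Iy1 (negbTE nab) (negbTE hne).
have y1top : weak_le y1 top.
  apply/weak_leP => c d; rewrite Iy1; case/orP => [/(weak_leP _ _ Mtop) //|].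
  by case/andP => /eqP-> /eqP->.
have My1 : weak_le M y1 by apply/weak_leP => c d h; rewrite Iy1 h.
have Emeet : meetp y1 x' = x.
  apply/esym/meet_uniq; apply/and3P; split.
  - exact: weak_le_trans hxM My1.
  - exact: Rxx'.
  - apply/forallP => w; apply/implyP => /andP[/weak_leP h1 /weak_leP h2].
    apply/weak_leP => c d hw; have := h2 _ _ hw; rewrite Ix'.
    case/orP => // /andP[/eqP Ec /eqP Ed].
    by move: (h1 _ _ hw); rewrite Ec Ed (negbTE ny1).
have Ry1x : R y1 x.
  rewrite -Emeet -{1}(meet_le y1top); exact (RmeetF HR (Rrefl HR y1) (Rsym HR Rtop)).
have Hy1 : R p y1 := Rtrans HR Hx (Rsym HR Ry1x).
have := weak_leP _ _ (HMmax _ Hy1) (M k) (M l).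
by rewrite Iy1 !eqxx orbT (ir_pair_false M kl) => /(_ isT).
Qed.

Lemma transfer_down p m x (i j : 'I_n) :
  R p m -> (forall y, R p y -> weak_le m y) ->
  R p x -> val j = i.+1 -> x j < x i -> ~~ R p (sw i j x) ->
  exists k l : 'I_n, [/\ val l = k.+1, m k = x i & m l = x j].
Proof.
move=> Hm Hmmin Hx ij lt Hx'.
set a := x j; set b := x i; set x' := sw i j x.
have Ix' : forall c d, ir x' c d = ir x c d && ~~ ((c == a) && (d == b)).
  by move=> c d; rewrite /x' ir_sw_down.
have hmx := Hmmin _ Hx.
have Rx'x : weak_le x' x by apply/weak_leP => c d; rewrite Ix' => /andP[].
have Rmx : R m x := Rtrans HR (Rsym HR Hm) Hx.
have iab : ir m a b.
  apply/negPn/negP => hab; case/negP: Hx'; apply: (Rtrans HR Hm).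
  apply: (Rconvex HR _ Rx'x) Rmx; apply/weak_leP => c d hc; rewrite Ix'.
  rewrite (weak_leP _ _ hmx _ _ hc) /=; apply/negP => /andP[/eqP Ec /eqP Ed].
  by move: hc; rewrite Ec Ed (negbTE hab).
set bot := meetp m x'.
have Rbot : R x' bot.
  rewrite -{1}(meet_le' Rx'x) /bot; exact (RmeetF HR (Rsym HR Rmx) (Rrefl HR x')).
have botm : weak_le bot m := meet_lb1 m x'.
have botx' : weak_le bot x' := meet_lb2 m x'.
have nbab : ~~ ir bot a b.
  apply/negP => /(weak_leP _ _ botx'); rewrite Ix' !eqxx andbF.
  by [].
have nbm : bot != m by apply/eqP => E; rewrite E iab in nbab.
case: (cover_down botm nbm) => k [l [kl ltm Hbot]].
set y1 := sw k l m.
have Iy1 : forall c d, ir y1 c d = ir m c d && ~~ ((c == m l) && (d == m k)).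
  by move=> c d; rewrite /y1 ir_sw_down.
case: (boolP ((a == m l) && (b == m k))) => [/andP[/eqP Ea /eqP Eb]|hne].
  by exists k, l.
exfalso.
have iy1 : ir y1 a b by rewrite Iy1 iab hne.
have boty1 : weak_le bot y1.
  apply/weak_leP => c d hc; rewrite Iy1 (weak_leP _ _ botm _ _ hc) /=.
  apply/negP => /andP[/eqP Ec /eqP Ed]; move: hc Hbot; rewrite Ec Ed => ->.
  by [].
have y1m : weak_le y1 m by apply/weak_leP => c d; rewrite Iy1 => /andP[].
have Ejoin : joinp y1 x' = x.
  apply/esym/join_uniq; apply/and3P; split.
  - exact: weak_le_trans y1m hmx.
  - exact: Rx'x.
  - apply/forallP => w; apply/implyP => /andP[/weak_leP h1 /weak_leP h2].
    apply/weak_leP => c d hx.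
    case: (boolP ((c == a) && (d == b))) => [/andP[/eqP Ec /eqP Ed]|hcd].
      by apply: h1; rewrite Ec Ed.
    by apply: h2; rewrite Ix' hx hcd.
have Ry1x : R y1 x.
  rewrite -Ejoin -{1}(join_le' boty1); exact (RjoinF HR (Rrefl HR y1) (Rsym HR Rbot)).
have Hy1 : R p y1 := Rtrans HR Hx (Rsym HR Ry1x).
have := weak_leP _ _ (Hmmin _ Hy1) (m l) (m k).
by rewrite Iy1 !eqxx andbF (ir_pair_true kl ltm) => /(_ isT).
Qed.

End Transfer.

Lemma spanning (V E : finType) (Es : {set E}) (f g : E -> V) :
  (forall S : {set V}, S != set0 -> S != setT ->
     exists2 e, e \in Es & (f e \in S) != (g e \in S)) ->
  #|V| <= #|Es|.+1.
Proof.
move=> Hcut.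
have Hk : forall k, k < #|V| -> exists S : {set V}, exists F : {set E},
   [/\ #|S| = k.+1, F \subset Es, #|F| = k &
       forall e, e \in F -> (f e \in S) && (g e \in S)].
  elim=> [|k IH] hk.
    have [v _] : exists v : V, true by move/card_gt0P: hk => [v _]; exists v.
    exists [set v], set0; split.
    - exact: cards1.
    - exact: sub0set.
    - exact: cards0.
    - by move=> e; rewrite in_set0.
  have [S [F [hS hF hFc hFe]]] := IH (ltnW hk).
  have nS0 : S != set0 by rewrite -card_gt0 hS.
  have nST : S != setT.
    by apply/eqP => E0; move: hk; rewrite -hS E0 cardsT ltnn.
  have [e he hc] := Hcut S nS0 nST.
  set w := if f e \in S then g e else f e.
  have wS : w \notin S.
    rewrite /w; case: ifP => h; move: hc; rewrite h /=.
      by case: (g e \in S).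
    by [].
  have eF : e \notin F.
    by apply/negP => /hFe /andP[h1 h2]; move: hc; rewrite h1 h2.
  exists (w |: S), (e |: F); split.
  - by rewrite cardsU1 wS hS.
  - by rewrite subUset sub1set he hF.
  - by rewrite cardsU1 eF hFc.
  - move=> e'; rewrite !inE => /orP[/eqP->|/hFe /andP[h1 h2]]; last by rewrite h1 h2 !orbT.
    rewrite /w; case: ifP => h; move: hc; rewrite h /=.
      by rewrite eqxx orbT.
    by case: (g e \in S) => //= _; rewrite eqxx ?orbT.
case: (posnP #|V|) => [->//|hV].
have hlt : #|V|.-1 < #|V| by lia.
have [S [F [_ hF hFc _]]] := Hk _ hlt.
have := subset_leq_card hF; rewrite hFc; lia.
Qed.

Section Classes.
Variable n : nat.
Implicit Types x y z : 'S_n.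

Lemma sw_invol (i j : 'I_n) x : sw i j (sw i j x) = x.
Proof. by rewrite /sw mulgA tperm2 mul1g. Qed.

Lemma sw_at_i (i j : 'I_n) x : sw i j x i = x j.
Proof. by rewrite sw_val tpermL. Qed.

Lemma sw_at_j (i j : 'I_n) x : sw i j x j = x i.
Proof. by rewrite sw_val tpermR. Qed.

Lemma sw_up_le (i j : 'I_n) x : val j = i.+1 -> x i < x j -> weak_le x (sw i j x).
Proof. by move=> ij lt; apply/weak_leP => a b h; rewrite ir_sw_up // h. Qed.

Lemma sw_up_neq (i j : 'I_n) x : val j = i.+1 -> x i < x j -> x != sw i j x.
Proof.
move=> ij lt; apply/eqP => E.
have : ir (sw i j x) (x i) (x j) by rewrite ir_sw_up // !eqxx orbT.
by rewrite -E ir_pair_false.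
Qed.

Lemma sw_up_cover (i j : 'I_n) x v : val j = i.+1 -> x i < x j ->
  weak_le x v -> weak_le v (sw i j x) -> v = x \/ v = sw i j x.
Proof.
move=> ij lt h1 h2.
case: (boolP (ir v (x i) (x j))) => hv.
  right; apply: weak_le_anti => //; apply/weak_leP => a b; rewrite ir_sw_up //.
  by case/orP => [/(weak_leP _ _ h1)//|/andP[/eqP-> /eqP->]].
left; apply: weak_le_anti => //; apply/weak_leP => a b ha.
have := weak_leP _ _ h2 _ _ ha; rewrite ir_sw_up //; case/orP => // /andP[/eqP Ea /eqP Eb].
by move: hv; rewrite -Ea -Eb ha.
Qed.

Variable R : rel 'S_n.
Hypothesis HR : lattice_congruence R.

Lemma cover_class lo hi : weak_le lo hi ->
  (forall v, weak_le lo v -> weak_le v hi -> v = lo \/ v = hi) ->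
  ~~ R lo hi -> q_cover R (cls R lo) (cls R hi).
Proof.
move=> lh hcov nR.
have hY : is_class R (cls R lo) := cls_is_class R lo.
have hX : is_class R (cls R hi) := cls_is_class R hi.
have loY : lo \in cls R lo by rewrite cls_in (Rrefl HR).
have hiX : hi \in cls R hi by rewrite cls_in (Rrefl HR).
apply/andP; split.
  apply/andP; split.
    apply/negP => /eqP E; case/negP: nR; by rewrite -cls_in E.
  by apply/existsP; exists lo; rewrite loY /=; apply/existsP; exists hi; rewrite hiX.
apply/negP => /existsP [Z /and3P[hZ /andP[nYZ /existsP[y1 /andP[y1Y /existsP[z1 /andP[z1Z le1]]]]]
   /andP[nZX /existsP[z2 /andP[z2Z /existsP[x2 /andP[x2X le2]]]]]]].
rewrite cls_in in y1Y; rewrite cls_in in x2X.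
have EZ := class_mem HR hZ z2Z.
rewrite EZ cls_in in z1Z.
set a := meetp z2 hi.
have Ra : R z2 a.
  rewrite -{1}(meet_le le2); exact (RmeetF HR (Rrefl HR z2) (Rsym HR x2X)).
set b := joinp z1 lo.
have Rb : R z1 b.
  rewrite -{1}(join_le' le1); exact (RjoinF HR (Rrefl HR z1) (Rsym HR y1Y)).
have Rab : R a b := Rtrans HR (Rtrans HR (Rsym HR Ra) z1Z) Rb.
have lob : weak_le lo b := join_ub2 z1 lo.
set v := joinp a lo.
have Rvb : R v b.
  rewrite /v -(join_le' lob); exact (RjoinF HR Rab (Rrefl HR lo)).
have vZ : v \in Z by rewrite EZ cls_in; exact: (Rtrans HR Ra (Rtrans HR Rab (Rsym HR Rvb))).
have h1 : weak_le lo v := join_ub2 a lo.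
have h2 : weak_le v hi := join_lub (meet_lb2 z2 hi) lh.
case: (hcov v h1 h2) => E.
  by move: nYZ; rewrite (class_eq HR hY hZ (_ : v \in cls R lo) vZ) ?eqxx // E.
by move: nZX; rewrite (class_eq HR hZ hX vZ (_ : v \in cls R hi)) ?eqxx // E.
Qed.

End Classes.

Section Lower.
Variable n : nat.
Implicit Types x y z : 'S_n.

Lemma consecutive_split (S : {set 'I_n}) : S != set0 -> S != setT ->
  exists a b : 'I_n, val b = (val a).+1 /\ (a \in S) != (b \in S).
Proof.
move=> /set0Pn [s sS] nST.
have n0 : 0 < n by apply: leq_ltn_trans (ltn_ord s).
set z := Ordinal n0.
case: (boolP [exists a : 'I_n, exists b : 'I_n, (val b == (val a).+1) && ((a \in S) != (b \in S))]).
  by move/existsP => [a /existsP [b /andP[/eqP E H]]]; exists a, b.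
move=> H; exfalso.
have Hall : forall k (a : 'I_n), val a = k -> (a \in S) = (z \in S).
  elim=> [|k IH] a Ha; first by congr (_ \in S); apply: val_inj.
  have Ha' : (a:nat) = k.+1 := Ha.
  have kn : k < n by have := ltn_ord a; lia.
  rewrite -(IH (Ordinal kn)) //; apply/eqP; apply/negPn/negP => hne.
  case/negP: H; apply/existsP; exists (Ordinal kn); apply/existsP; exists a.
  by rewrite Ha /= eqxx /= eq_sym.
case: (boolP (z \in S)) => hz.
  case/negP: nST; apply/eqP/setP => a; rewrite inE (Hall _ a erefl); exact: hz.
by move: sS; rewrite (Hall _ s erefl) (negbTE hz).
Qed.

Lemma adj_pair x (S : {set 'I_n}) u v : u \notin S -> v \in S -> bef x u v ->
  exists i j : 'I_n, [/\ val j = (val i).+1, x i \notin S & x j \in S].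
Proof.
move=> uS vS huv.
set K := [set k : 'I_n | (x k \notin S) && (k < pos x v)].
have uK : (x^-1)%g u \in K by rewrite inE permKV uS.
case: (@arg_maxnP _ ((x^-1)%g u) (fun k => k \in K) val uK) => k hk hmax.
move: hk; rewrite inE => /andP[hkS hkv].
have kn : k.+1 < n by apply: leq_ltn_trans hkv (ltn_ord _).
exists k, (Ordinal kn); split => //.
apply/negPn/negP => hj.
case: (ltngtP (k.+1) (pos x v)) => [lt|gt|E].
- have : Ordinal kn \in K by rewrite inE hj.
  by move/hmax => /=; rewrite ltnn.
- by move: gt; rewrite ltnNge hkv.
- have : Ordinal kn = (x^-1)%g v by apply: val_inj.
  by move=> E'; move: hj; rewrite E' permKV vS.
Qed.

Definition cnt (S : {set 'I_n}) x :=
  #|[set st : 'I_n * 'I_n | (st.1 \notin S) && (st.2 \in S) && bef x st.1 st.2]|.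

Lemma cnt_sw_lt (S : {set 'I_n}) x (i j : 'I_n) : val j = (val i).+1 -> x i \notin S -> x j \in S ->
  cnt S (sw i j x) < cnt S x.
Proof.
move=> ij hi hj; apply: proper_card; apply/properP; split.
  apply/subsetP => [[u v]]; rewrite !inE /= => /andP[/andP[hu hv] hb].
  have H1 : ~ (u = x i /\ v = x j).
    by move=> [Eu Ev]; move: hb; rewrite Eu Ev (bef_asym (bef_sw_pair x ij)).
  have H2 : ~ (u = x j /\ v = x i) by move=> [Eu Ev]; move: hu; rewrite Eu hj.
  by rewrite hu hv /= -(bef_sw_other ij H1 H2).
exists (x i, x j); rewrite !inE /= hi hj /= ?bef_x_ij //.
by rewrite (bef_asym (bef_sw_pair x ij)).
Qed.

Lemma cnt_sw_gt (S : {set 'I_n}) x (i j : 'I_n) : val j = (val i).+1 -> x i \in S -> x j \notin S ->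
  cnt S x < cnt S (sw i j x).
Proof.
move=> ij hi hj; apply: proper_card; apply/properP; split.
  apply/subsetP => [[u v]]; rewrite !inE /= => /andP[/andP[hu hv] hb].
  have H1 : ~ (u = x i /\ v = x j) by move=> [Eu Ev]; move: hu; rewrite Eu hi.
  have H2 : ~ (u = x j /\ v = x i).
    by move=> [Eu Ev]; move: hb; rewrite Eu Ev (bef_asym (bef_x_ij x ij)).
  by rewrite hu hv /= (bef_sw_other ij H1 H2).
exists (x j, x i); rewrite !inE /= hi hj /= ?bef_sw_pair //.
by rewrite (bef_asym (bef_x_ij x ij)).
Qed.

End Lower.

Section Main.
Variable n : nat.
Implicit Types x y z : 'S_n.
Variable R : rel 'S_n.
Hypothesis HR : lattice_congruence R.
Hypothesis HE : essential R.
Variables p M m : 'S_n.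
Hypothesis HM : R p M.
Hypothesis HMmax : forall y, R p y -> weak_le y M.
Hypothesis Hm : R p m.
Hypothesis Hmmin : forall y, R p y -> weak_le m y.

Lemma status (a b : 'I_n) : val b = (val a).+1 -> forall u, R p u -> ir u a b = ir M a b.
Proof.
move=> ab u Hu; apply/idP/idP => [/(weak_leP _ _ (HMmax Hu))//|hM].
apply/negPn/negP => hu.
case: (@arg_maxnP _ u (fun w => R p w && ~~ ir w a b) (@wt n) (introT andP (conj Hu hu)))
  => w /andP[Hw hw] hmax.
have wM := HMmax Hw.
have nwM : w != M by apply/eqP => E; move: hw; rewrite E hM.
case: (cover_up wM nwM) => k [l [kl lt hMkl]].
set y1 := sw k l w.
have wy1 : weak_le w y1 := sw_up_le kl lt.
have y1M : weak_le y1 M.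
  apply/weak_leP => c d; rewrite ir_sw_up //; case/orP => [/(weak_leP _ _ wM)//|].
  by case/andP => /eqP-> /eqP->.
have Rwy1 : R w y1 := Rconvex HR wy1 y1M (Rtrans HR (Rsym HR Hw) HM).
case: (boolP ((w k == a) && (w l == b))) => [/andP[/eqP Ea /eqP Eb]|hne].
  apply: (HE ab); exists w, y1; split => //.
  exists k, l; split => //.
  - by move=> q; rewrite sw_val.
  - move=> c /andP[ac cb]; exfalso; have ab2 : (b:nat) = a.+1 := ab.
    lia.
have hy1 : ~~ ir y1 a b.
  rewrite ir_sw_up // (negbTE hw) /=; apply/negP => /andP[/eqP Ea /eqP Eb].
  by move: hne; rewrite -Ea -Eb !eqxx.
have := hmax y1; rewrite (Rtrans HR Hw Rwy1) hy1 => /(_ isT) H.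
have H' : wt y1 <= wt w := H.
by move: (wt_lt wy1 (sw_up_neq kl lt)); rewrite ltnNge H'.
Qed.

Definition Es : {set bool * ('I_n * 'I_n)} :=
  [set e | (val e.2.2 == (val e.2.1).+1) &&
           (if e.1 then M e.2.1 < M e.2.2 else m e.2.2 < m e.2.1)].
Definition ef (e : bool * ('I_n * 'I_n)) := (if e.1 then M else m) e.2.1.
Definition eg (e : bool * ('I_n * 'I_n)) := (if e.1 then M else m) e.2.2.

Lemma cross_leave x (S : {set 'I_n}) (i j : 'I_n) : R p x -> val j = (val i).+1 ->
  (x i \in S) != (x j \in S) -> ~~ R p (sw i j x) ->
  exists2 e, e \in Es & (ef e \in S) != (eg e \in S).
Proof.
move=> Hx ij hS hn.
have nij := x_ij_neq x ij.
case: (ltngtP (x i) (x j)) => [lt|gt|E].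
- case: (transfer_up HR HM HMmax Hx ij lt hn) => k [l [kl Ek El]].
  exists (true, (k, l)); last by rewrite /ef /eg /= Ek El.
  by rewrite inE /= kl eqxx Ek El lt.
- case: (transfer_down HR Hm Hmmin Hx ij gt hn) => k [l [kl Ek El]].
  exists (false, (k, l)); last by rewrite /ef /eg /= Ek El.
  by rewrite inE /= kl eqxx Ek El gt.
- by move/val_inj: E nij => ->; rewrite eqxx.
Qed.

Lemma cut (S : {set 'I_n}) : S != set0 -> S != setT ->
  exists2 e, e \in Es & (ef e \in S) != (eg e \in S).
Proof.
move=> nS0 nST.
case: (@arg_minnP _ p (fun x => R p x) (cnt S) (Rrefl HR p)) => xm Hxm hmin.
case: (eqVneq [set st : 'I_n * 'I_n | (st.1 \notin S) && (st.2 \in S) && bef xm st.1 st.2] set0); last first.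
  move=> /set0Pn [[u v]]; rewrite inE /= => /andP[/andP[hu hv] hb].
  case: (adj_pair hu hv hb) => i [j [ij hi hj]].
  apply: (cross_leave Hxm ij); first by rewrite hj (negbTE hi).
  apply/negP => Hs; have := hmin _ Hs; rewrite leqNgt (cnt_sw_lt ij hi hj).
  by [].
move=> P1.
case: (@arg_maxnP _ p (fun x => R p x) (cnt S) (Rrefl HR p)) => xM HxM hmax.
case: (eqVneq [set st : 'I_n * 'I_n | (st.1 \in S) && (st.2 \notin S) && bef xM st.1 st.2] set0); last first.
  move=> /set0Pn [[u v]]; rewrite inE /= => /andP[/andP[hu hv] hb].
  have hu' : u \notin ~: S by rewrite inE hu.
  have hv' : v \in ~: S by rewrite inE.
  case: (adj_pair hu' hv' hb) => i [j [ij hi hj]].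
  rewrite !inE negbK in hi hj.
  apply: (cross_leave HxM ij); first by rewrite hi (negbTE hj).
  apply/negP => Hs; have H := hmax _ Hs.
  have H' : cnt S (sw i j xM) <= cnt S xM := H.
  by move: (cnt_sw_gt ij hi hj); rewrite ltnNge H'.
move=> P2.
case: (consecutive_split nS0 nST) => a [b [ab hab]].
have sm := status ab Hxm; have sM := status ab HxM.
have ab' : a < b by rewrite ab.
have nab : a != b by rewrite neq_ltn ab'.
have nP1 : forall u v, u \notin S -> v \in S -> bef xm u v = false.
  move=> u v hu hv; apply/negP => hb.
  have : (u, v) \in set0 by rewrite -P1 inE /= hu hv hb.
  by rewrite in_set0.
have nP2 : forall u v, u \in S -> v \notin S -> bef xM u v = false.
  move=> u v hu hv; apply/negP => hb.
  have : (u, v) \in set0 by rewrite -P2 inE /= hu hv hb.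
  by rewrite in_set0.
case: (boolP (a \in S)) => ha.
- have hb : b \notin S by move: hab; rewrite ha; case: (b \in S).
  have e1 : ir xm a b = false by rewrite /ir (nP1 _ _ hb ha) andbF.
  have e2 : ir xM a b.
    by rewrite /ir ab' /=; move: (bef_total xM nab); rewrite (nP2 _ _ ha hb).
  by move: e2; rewrite sM -sm e1.
- have hb : b \in S by move: hab; rewrite (negbTE ha); case: (b \in S).
  have e1 : ir xM a b = false by rewrite /ir (nP2 _ _ hb ha) andbF.
  have e2 : ir xm a b.
    by rewrite /ir ab' /=; move: (bef_total xm nab); rewrite (nP1 _ _ ha hb).
  by move: e2; rewrite sm -sM e1.
Qed.

Lemma notX_down (k l : 'I_n) : val l = (val k).+1 -> m l < m k -> ~~ R p (sw k l m).
Proof.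
move=> kl lt; set c := sw k l m.
have hc : c k < c l by rewrite /c sw_at_i sw_at_j.
have cm : weak_le c m by rewrite -(sw_invol k l m) -/c; exact: sw_up_le.
have ncm : c != m by rewrite -(sw_invol k l m) -/c; exact: sw_up_neq.
apply/negP => Hc; case/negP: ncm; apply/eqP; apply: weak_le_anti => //.
exact: Hmmin.
Qed.

Lemma notX_up (k l : 'I_n) : val l = (val k).+1 -> M k < M l -> ~~ R p (sw k l M).
Proof.
move=> kl lt; apply/negP => Hd.
have E := weak_le_anti (sw_up_le kl lt) (HMmax Hd).
by move: (sw_up_neq kl lt); rewrite -E eqxx.
Qed.

Definition eh (e : bool * ('I_n * 'I_n)) := cls R (sw e.2.1 e.2.2 (if e.1 then M else m)).

Lemma clsX_M : cls R M = cls R p.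
Proof. by apply/esym/cls_eq. Qed.
Lemma clsX_m : cls R m = cls R p.
Proof. by apply/esym/cls_eq. Qed.

Lemma eh_adj e : e \in Es -> is_class R (eh e) && q_adj R (cls R p) (eh e).
Proof.
case: e => [b [k l]]; rewrite inE /= => /andP[/eqP kl hlt].
rewrite /eh /= cls_is_class /q_adj /=.
case: b hlt => /= hlt.
- apply/orP; left; rewrite -clsX_M; apply: (cover_class HR (sw_up_le kl hlt)).
    by move=> v; exact: sw_up_cover.
  apply/negP => HMd; case/negP: (notX_up kl hlt); exact (Rtrans HR HM HMd).
- apply/orP; right; rewrite -clsX_m.
  set c := sw k l m.
  have hc : c k < c l by rewrite /c sw_at_i sw_at_j.
  rewrite -(sw_invol k l m) -/c.
  apply: (cover_class HR (sw_up_le kl hc)); first by move=> v; exact: sw_up_cover.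
  rewrite /c sw_invol; apply/negP => Hcm.
  case/negP: (notX_down kl hlt); exact (Rtrans HR Hm (Rsym HR Hcm)).
Qed.

Lemma eh_inj : {in Es &, injective eh}.
Proof.
move=> [b1 [k1 l1]] [b2 [k2 l2]]; rewrite !inE /= => /andP[/eqP kl1 h1] /andP[/eqP kl2 h2].
rewrite /eh /= => E.
set x1 := sw k1 l1 (if b1 then M else m); set x2 := sw k2 l2 (if b2 then M else m).
have R12 : R x1 x2.
  have : x2 \in cls R x2 by rewrite cls_in (Rrefl HR).
  by rewrite -/x1 -/x2 in E; rewrite -E cls_in.
suff [Eb Ek] : b1 = b2 /\ k1 = k2.
  have El : l1 = l2 by apply: val_inj => /=; rewrite kl1 kl2 Ek.
  by rewrite Eb Ek El.
have mM : weak_le m M by apply: HMmax.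
clear E; move: R12; rewrite /x1 /x2; clear x1 x2.
case: b1 h1 => /= h1; case: b2 h2 => /= h2 R12;
  set x1 := sw k1 l1 _ in R12 *; set x2 := sw k2 l2 _ in R12 *.
- split => //; apply/eqP/negPn/negP => nk.
  have Hmeet : is_meet x1 x2 M.
    apply/and3P; split; [exact: sw_up_le|exact: sw_up_le|].
    apply/forallP => w; apply/implyP => /andP[/weak_leP w1 /weak_leP w2].
    apply/weak_leP => c d hw; have := w1 _ _ hw; have := w2 _ _ hw.
    rewrite !ir_sw_up //; case/orP => // /andP[/eqP Ec _]; case/orP => // /andP[/eqP Ec' _].
    by case/negP: nk; apply/eqP; apply: (@perm_inj _ M); rewrite -Ec -Ec'.
  have := Rmeet HR R12 (Rrefl HR x2) Hmeet (is_meet_le (weak_le_refl x2)).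
  move=> RM; case/negP: (notX_up kl2 h2); exact (Rtrans HR HM RM).
- exfalso; case/negP: (notX_down kl2 h2).
  have x2m : weak_le x2 m.
    by apply/weak_leP => c d; rewrite ir_sw_down // => /andP[].
  have Mx1 : weak_le M x1 by exact: sw_up_le.
  have := Rconvex HR x2m (weak_le_trans mM Mx1) (Rsym HR R12).
  move=> Rx2m; exact (Rtrans HR Hm (Rsym HR Rx2m)).
- exfalso; case/negP: (notX_down kl1 h1).
  have x1m : weak_le x1 m.
    by apply/weak_leP => c d; rewrite ir_sw_down // => /andP[].
  have Mx2 : weak_le M x2 by exact: sw_up_le.
  have := Rconvex HR x1m (weak_le_trans mM Mx2) R12.
  move=> Rx1m; exact (Rtrans HR Hm (Rsym HR Rx1m)).
- split => //; apply/eqP/negPn/negP => nk.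
  have Hjoin : is_join x1 x2 m.
    apply/and3P; split.
    + by apply/weak_leP => c d; rewrite ir_sw_down // => /andP[].
    + by apply/weak_leP => c d; rewrite ir_sw_down // => /andP[].
    apply/forallP => w; apply/implyP => /andP[/weak_leP w1 /weak_leP w2].
    apply/weak_leP => c d hm.
    case: (boolP ((c == m l1) && (d == m k1))) => [/andP[_ /eqP Ed]|hn1].
      apply: w2; rewrite ir_sw_down // hm /=; apply/negP => /andP[_ /eqP Ed'].
      by case/negP: nk; apply/eqP; apply: (@perm_inj _ m); rewrite -Ed -Ed'.
    by apply: w1; rewrite ir_sw_down // hm hn1.
  have := Rjoin HR R12 (Rrefl HR x2) Hjoin (is_join_le (weak_le_refl x2)).
  move=> Rm; case/negP: (notX_down kl2 h2); exact (Rtrans HR Hm Rm).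
Qed.

Lemma lower_bound : n - 1 <= q_deg R (cls R p).
Proof.
have Hsub : [set eh e | e in Es] \subset [set Y | is_class R Y && q_adj R (cls R p) Y].
  apply/subsetP => Y /imsetP [e he ->]; rewrite inE; exact: eh_adj.
rewrite /q_deg; apply: leq_trans (subset_leq_card Hsub).
rewrite (card_in_imset eh_inj).
have := spanning cut; rewrite card_ord.
move=> h; rewrite leq_subLR; exact: h.
Qed.

End Main.

Section Top.
Variable n : nat.
Implicit Types x y z : 'S_n.
Local Notation one := (1%g : 'S_n).

Lemma pos1 (v : 'I_n) : pos one v = v.
Proof. by rewrite /pos invg1 perm1. Qed.

Lemma ir1 (a b : 'I_n) : ir one a b = false.
Proof.
by rewrite /ir /bef !pos1; case: ltngtP.
Qed.

Lemma le1 x : weak_le one x.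
Proof. by apply/weak_leP => a b; rewrite ir1. Qed.

Variable R : rel 'S_n.
Hypothesis HR : lattice_congruence R.
Hypothesis HE : essential R.

Lemma cls1 q : R one q -> q = one.
Proof.
move=> Hq; apply/eqP/negPn/negP => nq.
have n1q : one != q by rewrite eq_sym.
case: (cover_up (le1 q) n1q) => i [j [ij lt hq]].
set s := sw i j one.
have s1 : weak_le one s := sw_up_le ij lt.
have sq : weak_le s q.
  apply/weak_leP => a b; rewrite ir_sw_up // ir1 /=.
  by case/andP => /eqP-> /eqP->.
have R1s : R one s := Rconvex HR s1 sq Hq.
have ij' : val (one j) = (val (one i)).+1 by rewrite !perm1.
apply: (HE ij'); exists one, s; split => //.
exists i, j; split => //.
- by move=> k; rewrite sw_val.
- move=> c; rewrite !perm1 => /andP[ic cj]; exfalso.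
  have ij2 : (j:nat) = i.+1 := ij; lia.
Qed.

Definition Pairs : {set 'I_n * 'I_n} := [set ij | val ij.2 == (val ij.1).+1].

Lemma card_Pairs : #|Pairs| <= n - 1.
Proof.
case: (posnP n) => [n0|n0].
  apply: leq_trans (subset_leq_card (subsetT _)) _.
  by rewrite cardsT card_prod card_ord n0.
have hlast : n.-1 < n by lia.
set last := Ordinal hlast.
have inj : {in Pairs &, injective (fun ij : 'I_n * 'I_n => ij.1)}.
  move=> [i1 j1] [i2 j2]; rewrite !inE /= => /eqP h1 /eqP h2 E.
  by subst; congr pair; apply: val_inj => /=; rewrite h1 h2.
rewrite -(card_in_imset inj) subn1 -[n in n.-1](card_ord n) -(cardsC1 last).
apply: subset_leq_card; apply/subsetP => k /imsetP [[i j] hij ->].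
rewrite !inE /=; apply/negP => /eqP E; move: hij; rewrite inE /= => /eqP h.
have := ltn_ord j; rewrite h E /=; lia.
Qed.

Lemma upper_bound : q_deg R (cls R one) <= n - 1.
Proof.
set X0 := cls R one.
have hX0 : is_class R X0 := cls_is_class R one.
have oneX : one \in X0 by rewrite cls_in (Rrefl HR).
rewrite /q_deg; apply: leq_trans card_Pairs.
apply: leq_trans (_ : #|[set cls R (sw ij.1 ij.2 one) | ij in Pairs]| <= _); last first.
  exact: leq_imset_card.
apply: subset_leq_card; apply/subsetP => Y; rewrite inE => /andP[hY].
rewrite /q_adj => /orP[hc|hc]; last first.
  exfalso; move: hc => /andP[/andP[nYX /existsP[y /andP[yY /existsP[x /andP[xX le]]]]] _].
  rewrite cls_in in xX; move/cls1: xX => Ex; rewrite Ex in le.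
  have Ey : y = one by apply: weak_le_anti => //; exact: le1.
  by move: nYX; rewrite (class_eq HR hY hX0 (_ : one \in Y) oneX) ?eqxx // -Ey.
move: hc => /andP[/andP[nXY /existsP[x /andP[xX /existsP[y /andP[yY le]]]]] nZ].
have y1 : one != y.
  apply/eqP => Ey; move: nXY; rewrite (class_eq HR hX0 hY oneX (_ : one \in Y)) ?eqxx //.
  by rewrite Ey.
case: (cover_up (le1 y) y1) => i [j [ij lt hy]].
set s := sw i j one.
have s1 : weak_le one s := sw_up_le ij lt.
have sy : weak_le s y.
  apply/weak_leP => a b; rewrite ir_sw_up // ir1 /=.
  by case/andP => /eqP-> /eqP->.
case: (eqVneq Y (cls R s)) => [EY|nYs].
  apply/imsetP; exists (i, j) => //; by rewrite inE /= ij eqxx.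
exfalso; case/negP: nZ; apply/existsP; exists (cls R s).
have sZ : s \in cls R s by rewrite cls_in (Rrefl HR).
rewrite cls_is_class /=; apply/andP; split; apply/andP; split.
- apply/negP => /eqP E; have : s \in X0 by rewrite E.
  rewrite cls_in => /cls1 Es; move: (sw_up_neq ij lt); rewrite -/s Es eqxx.
  by [].
- by apply/existsP; exists one; rewrite oneX /=; apply/existsP; exists s; rewrite sZ.
- by rewrite eq_sym.
- by apply/existsP; exists s; rewrite sZ /=; apply/existsP; exists y; rewrite yY.
Qed.

End Top.

Theorem mainTheorem12 (n : nat) (hn : 0 < n) (R : rel 'S_n) :
  lattice_congruence R -> essential R ->
  (forall X, is_class R X -> n - 1 <= q_deg R X) /\
  (exists X, is_class R X /\ q_deg R X = n - 1).
Proof.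
move=> HR HE.
have LB : forall X, is_class R X -> n - 1 <= q_deg R X.
  move=> X /existsP [p /eqP ->].
  case: (cls_max HR p) => M [HM HMmax]; case: (cls_min HR p) => m [Hm Hmmin].
  exact: (lower_bound HR HE HM HMmax Hm Hmmin).
split => //.
exists (cls R 1%g); split; first exact: cls_is_class.
apply/eqP; rewrite eqn_leq (upper_bound HR HE) /=.
exact: LB (cls_is_class R 1%g).
Qed.
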